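(* Let $\Omega$ be a Polish space with its Borel $\sigma$-algebra, and let $F$ and $R$ be partially ordered topological spaces that are Souslin spaces and whose order relations are Borel subsets of $F\times F$ and $R\times R$ respectively. Let $\mathrm{DP}_\Omega(F,R)$ be the set of all upper sets $\mathrm{dp}$ of $F^{\mathrm{op}}\times R$ of the form $\mathrm{dp}=\uparrow A$ for some analytic set $A\subseteq F^{\mathrm{op}}\times R$, and let $\mathcal{R}$ be the set of maps $\alpha:\Omega\to \mathrm{DP}_\Omega(F,R)$ whose feasible set $\{(\omega,x_F,x_R) : (x_F,x_R)\in\alpha(\omega)\}\subseteq \Omega\times F\times R$ is analytic. Then $(\mathrm{DP}_\Omega(F,R),\mathcal{R})$ is a quasi-universal space; that is, (i) for each $\mathrm{dp}\in\mathrm{DP}_\Omega(F,R)$ the constant map $\omega\mapsto \mathrm{dp}$ lies in $\mathcal{R}$, and (ii) for each $\alpha\in\mathcal{R}$ and each Borel measurable $\varphi:\Omega\to\Omega$, $\alpha\circ\varphi\in\mathcal{R}$.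
   Context: A Souslin space is a Hausdorff space that is a continuous image of a Polish space; a subset of a Hausdorff space is analytic if it is a continuous image of a Polish space. $F^{\mathrm{op}}$ is $F$ with reversed order; $F^{\mathrm{op}}\times R$ has the componentwise order and product topology. An upper set $U$ satisfies: if $u\in U$ and $u\preceq v$ then $v\in U$; $\uparrow A$ denotes the set of elements above some element of $A$. A quasi-measurable space over the sample space $\Omega$ is a set $A$ together with a set of maps $\Omega\to A$ (''random variables'') containing all constant maps and closed under precomposition with Borel measurable maps $\Omega\to\Omega$; it is called a quasi-universal space when $\Omega$ is Polish. *)

(* Defs.v *)
From HB Require Import structures.
From mathcomp Require Import all_boot all_order all_algebra.
From mathcomp Require Import all_classical all_reals all_analysis.
From mathcomp Require Import Rstruct Rstruct_topology.
Set Implicit Arguments. Unset Strict Implicit. Unset Printing Implicit Defensive.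
Import Order.TTheory GRing.Theory Num.Theory.
Local Open Scope classical_set_scope.
Local Open Scope ring_scope.

Notation Real := Rdefinitions.R.

Definition is_metric (T : Type) (d : T -> T -> Real) : Prop :=
  (forall x y, 0 <= d x y) /\ (forall x y, d x y = 0 <-> x = y) /\
  (forall x y, d x y = d y x) /\ (forall x y z, d x z <= d x y + d y z).

Definition polish (T : topologicalType) : Prop :=
  exists d : T -> T -> Real,
    is_metric d /\
    (forall A : set T, open A <->
       (forall x, A x -> exists e : Real, 0 < e /\ [set y | d x y < e] `<=` A)) /\
    (forall u : nat -> T,
       (forall e : Real, 0 < e -> exists N, forall m n, (N <= m)%N -> (N <= n)%N ->
          d (u m) (u n) < e) ->
       exists x, forall e : Real, 0 < e -> exists N, forall n, (N <= n)%N -> d (u n) x < e) /\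
    (exists D : set T, countable D /\
       forall U : set T, open U -> U !=set0 -> (U `&` D) !=set0).

Definition analytic (X : topologicalType) (A : set X) : Prop :=
  exists (P : topologicalType) (f : P -> X), polish P /\ continuous f /\ range f = A.

Definition souslin (X : topologicalType) : Prop :=
  hausdorff_space X /\ analytic (@setT X).

Definition borel (X : topologicalType) : set (set X) := <<s @open X >>.

Definition borel_measurable (X Y : topologicalType) (f : X -> Y) : Prop :=
  forall B : set Y, borel B -> borel (f @^-1` B).

Definition partial_order (T : Type) (le : T -> T -> Prop) : Prop :=
  (forall x, le x x) /\ (forall x y, le x y -> le y x -> x = y) /\
  (forall x y z, le x y -> le y z -> le x z).

Definition le_opprod (F R : Type) (leF : F -> F -> Prop) (leR : R -> R -> Prop)
  (u v : F * R) : Prop := leF v.1 u.1 /\ leR u.2 v.2.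

Definition upper_set (T : Type) (le : T -> T -> Prop) (U : set T) : Prop :=
  forall u v, U u -> le u v -> U v.

Definition upclosure (T : Type) (le : T -> T -> Prop) (A : set T) : set T :=
  [set v | exists2 u, A u & le u v].

Definition is_DP (F R : topologicalType) (leF : F -> F -> Prop) (leR : R -> R -> Prop)
  (dp : set (F * R)) : Prop :=
  upper_set (le_opprod leF leR) dp /\
  exists A : set (F * R), analytic A /\ dp = upclosure (le_opprod leF leR) A.

Definition DP (F R : topologicalType) (leF : F -> F -> Prop) (leR : R -> R -> Prop) :=
  {dp : set (F * R) | is_DP leF leR dp}.

Definition DP_RV (Omega F R : topologicalType) (leF : F -> F -> Prop) (leR : R -> R -> Prop)
  : set (Omega -> DP leF leR) :=
  [set alpha | analytic [set p : Omega * (F * R) | proj1_sig (alpha p.1) p.2]].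

Definition quasi_measurable_space (Omega : topologicalType) (A : Type)
  (RV : set (Omega -> A)) : Prop :=
  (forall a : A, RV (fun _ => a)) /\
  (forall (alpha : Omega -> A) (phi : Omega -> Omega),
      RV alpha -> borel_measurable phi -> RV (alpha \o phi)).

Definition quasi_universal_space (Omega : topologicalType) (A : Type)
  (RV : set (Omega -> A)) : Prop :=
  polish Omega /\ quasi_measurable_space RV.
Arguments DP_RV Omega {F R} leF leR.

(* Main.v *)
Require Import Defs.
From HB Require Import structures.
From mathcomp Require Import all_boot all_order all_algebra.
From mathcomp Require Import all_classical all_reals all_analysis.
From mathcomp Require Import Rstruct Rstruct_topology.
From mathcomp Require Import lra.
Set Implicit Arguments. Unset Strict Implicit. Unset Printing Implicit Defensive.
Import Order.TTheory GRing.Theory Num.Theory.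
Local Open Scope classical_set_scope.
Local Open Scope ring_scope.
Record MP := MkMP {
  car :> Type;
  md : car -> car -> Defs.Real;
  md_met : is_metric md;
  md_cpl : forall u : nat -> car,
       (forall e : Defs.Real, 0 < e -> exists N, forall m n, (N <= m)%N -> (N <= n)%N ->
          md (u m) (u n) < e) ->
       exists x, forall e : Defs.Real, 0 < e -> exists N, forall n, (N <= n)%N -> md (u n) x < e;
  md_sep : forall x0 : car, exists en : nat -> car,
       forall x e, 0 < e -> exists n, md x (en n) < e }.

Section MPlemmas.
Variable M : MP.
Lemma md_ge0 (x y : M) : 0 <= md x y.
Proof. by case: (md_met M) => h _. Qed.
Lemma md_eq0 (x y : M) : md x y = 0 <-> x = y.
Proof. by case: (md_met M) => _ [h _]. Qed.
Lemma md_xx (x : M) : md x x = 0.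
Proof. by apply/md_eq0. Qed.
Lemma md_sym (x y : M) : md x y = md y x.
Proof. by case: (md_met M) => _ [_ [h _]]. Qed.
Lemma md_tri (x y z : M) : md x z <= md x y + md y z.
Proof. by case: (md_met M) => _ [_ [_ h]]. Qed.
End MPlemmas.

Definition mt (M : MP) : Type := car M.
HB.instance Definition _ (M : MP) := gen_eqMixin (mt M).
HB.instance Definition _ (M : MP) := gen_choiceMixin (mt M).
HB.instance Definition _ (M : MP) := @isMetric.Build Defs.Real (mt M) (@md M)
  (@md_xx M) (fun x y => proj1 (md_eq0 x y)) (@md_sym M) (fun y x z => md_tri x y z).

Lemma mt_nbhs (M : MP) (x : mt M) (U : set (mt M)) :
  nbhs x U <-> exists2 e : Defs.Real, 0 < e & forall y, md x y < e -> U y.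
Proof.
rewrite -metricType_numDomainType.filter_from_mdist_nbhs.
split; move=> [e e0 h]; exists e => //.
Qed.
Lemma mt_open (M : MP) (A : set (mt M)) :
  open A <-> forall x, A x -> exists2 e : Defs.Real, 0 < e & forall y, md x y < e -> A y.
Proof.
rewrite openE; split => h x Ax.
  by have /mt_nbhs := h x Ax.
by apply/mt_nbhs; apply: h.
Qed.

Lemma mt_cont (M : MP) (X : topologicalType) (f : mt M -> X) :
  (forall x U, nbhs (f x) U -> exists2 e : Defs.Real, 0 < e & forall y, md x y < e -> U (f y))
  -> continuous f.
Proof. by move=> h x U /h hU; apply/mt_nbhs. Qed.

Lemma cont_mt (M : MP) (X : topologicalType) (f : mt M -> X) :
  continuous f ->
  forall x U, nbhs (f x) U -> exists2 e : Defs.Real, 0 < e & forall y, md x y < e -> U (f y).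
Proof. by move=> h x U /h /mt_nbhs. Qed.

Lemma mt_mt_cont (M N : MP) (f : mt M -> mt N) :
  (forall x (e : Defs.Real), 0 < e -> exists2 d : Defs.Real, 0 < d & forall y, md x y < d -> md (f x) (f y) < e)
  -> continuous f.
Proof.
move=> h; apply: mt_cont => x U /mt_nbhs [e e0 hU].
have [d d0 hd] := h x e e0; exists d => // y /hd; exact: hU.
Qed.

Lemma MP_polish (M : MP) : polish (mt M).
Proof.
exists (@md M); split; first exact: md_met.
split.
  move=> A; rewrite mt_open; split => h x /h.
    by move=> [e e0 he]; exists e; split => // y /= /he.
  by move=> [e [e0 he]]; exists e => // y hy; apply: he.
split; first exact: md_cpl.
have [[x0 _]|nx] := pselect (exists x : mt M, True); last first.
  exists set0; split; first exact: countable0.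
  by move=> U _ [x _]; exfalso; apply: nx; exists x.
have [en hen] := md_sep x0.
exists (range en); split; first exact: card_image_le.
move=> U /mt_open oU [x Ux]; have [e e0 he] := oU x Ux.
have [n hn] := hen x e e0.
by exists (en n); split; [apply: he | exists n].
Qed.


Section Pol.
Variables (P : topologicalType) (h : polish P).
Definition pd : P -> P -> Defs.Real := proj1_sig (cid h).
Lemma pd_spec : is_metric pd /\
    (forall A : set P, open A <->
       (forall x, A x -> exists e : Defs.Real, 0 < e /\ [set y | pd x y < e] `<=` A)) /\
    (forall u : nat -> P,
       (forall e : Defs.Real, 0 < e -> exists N, forall m n, (N <= m)%N -> (N <= n)%N ->
          pd (u m) (u n) < e) ->
       exists x, forall e : Defs.Real, 0 < e -> exists N, forall n, (N <= n)%N -> pd (u n) x < e) /\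
    (exists D : set P, countable D /\
       forall U : set P, open U -> U !=set0 -> (U `&` D) !=set0).
Proof. exact: (proj2_sig (cid h)). Qed.

Lemma pd_met : is_metric pd. Proof. by case: pd_spec. Qed.
Lemma pd_tri x y z : pd x z <= pd x y + pd y z.
Proof. by case: pd_met => _ [_ [_ ]]; apply. Qed.
Lemma pd_xx x : pd x x = 0.
Proof. by case: pd_met => _ [h2 _]; apply/h2. Qed.

Lemma pd_ball_open x e : open [set y | pd x y < e].
Proof.
case: pd_spec => _ [-> _] y /= hy; exists (e - pd x y); split; first by rewrite subr_gt0.
move=> z /= hz; have := pd_tri x y z; lra.
Qed.

Lemma pd_nbhs x U : nbhs x U <-> exists2 e : Defs.Real, 0 < e & forall y, pd x y < e -> U y.
Proof.
rewrite nbhsE; split.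
  move=> [B [oB Bx] BU]; case: pd_spec => _ [hO _].
  have [e [e0 he]] := (proj1 (hO B) oB) x Bx.
  by exists e => // y hy; apply: BU; apply: he.
move=> [e e0 he]; exists [set y | pd x y < e]; last by move=> y; apply: he.
by split; [exact: pd_ball_open | rewrite /= pd_xx].
Qed.

Lemma pd_sep (x0 : P) : exists en : nat -> P,
       forall x e, 0 < e -> exists n, pd x (en n) < e.
Proof.
case: pd_spec => _ [_ [_ [D [cD hD]]]].
have [f finj] := countable_injP _ cD.
pose en n := match pselect (exists x, D x /\ f x = n) with
  | left hx => proj1_sig (cid hx) | right _ => x0 end.
exists en => x e e0.
have xin : [set y | pd x y < e] x by rewrite /= pd_xx.
have [y [/= xy Dy]] := hD _ (pd_ball_open x e) (ex_intro _ x xin).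
exists (f y); rewrite /en; case: pselect => [hx|]; last by move=> nh; exfalso; apply: nh; exists y.
case: (cid hx) => z [Dz fz] /=.
suff -> : z = y by [].
by apply: finj; rewrite ?inE.
Qed.

Lemma pd_cpl : forall u : nat -> P,
       (forall e : Defs.Real, 0 < e -> exists N, forall m n, (N <= m)%N -> (N <= n)%N ->
          pd (u m) (u n) < e) ->
       exists x, forall e : Defs.Real, 0 < e -> exists N, forall n, (N <= n)%N -> pd (u n) x < e.
Proof. by case: pd_spec => _ [_ []]. Qed.

Definition MPof : MP := @MkMP P pd pd_met pd_cpl pd_sep.

Lemma MPof_id_cont : continuous (fun x : mt MPof => (x : P)).
Proof.
apply: mt_cont => x U /pd_nbhs [e e0 he]; exists e => //.
Qed.

Lemma MPof_open (A : set P) : @open (mt MPof) A <-> open A.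
Proof.
rewrite mt_open; case: pd_spec => _ [-> _]; split => hA x /hA.
  by move=> [e e0 he]; exists e; split => // y /he.
by move=> [e [e0 he]]; exists e => // y hy; apply: he.
Qed.

Lemma MPof_borel : @borel (mt MPof) = @borel P.
Proof.
rewrite /borel; congr (<<s _ >>).
by apply/funext => A; apply/propext; apply: MPof_open.
Qed.
End Pol.


Definition w (k : nat) : Defs.Real := (k.+1%:R)^-1.
Lemma w_gt0 k : 0 < w k.
Proof. by rewrite /w invr_gt0 ltr0Sn. Qed.
Lemma w_le k K : (k <= K)%N -> w K <= w k.
Proof. by move=> kK; rewrite /w lef_pV2 ?posrE ?ltr0Sn // ler_nat ltnS. Qed.
Lemma w_small (e : Defs.Real) : 0 < e -> exists k, w k < e.
Proof.
move=> e0; have ie : 0 <= e^-1 by rewrite invr_ge0 ltW.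
have /andP[_ h] := truncn_itv ie; exists (Num.Def.trunc e^-1).
by rewrite /w -[e]invrK ltf_pV2 ?posrE ?invr_gt0 ?ltr0Sn // invrK.
Qed.

Definition an (X : topologicalType) (A : set X) : Prop :=
  exists (M : MP) (f : mt M -> X), continuous f /\ range f = A.

Lemma an_analytic (X : topologicalType) (A : set X) : an A -> analytic A.
Proof. by move=> [M [f [cf rf]]]; exists (mt M), f; split => //; apply: MP_polish. Qed.

Lemma analytic_an (X : topologicalType) (A : set X) : analytic A -> an A.
Proof.
move=> [P [f [hP [cf rf]]]]; exists (MPof hP), (f \o (fun x : mt (MPof hP) => (x : P))).
split => //.
move=> x; apply: continuous_comp; [exact: MPof_id_cont | exact: cf].
Qed.

Lemma an_image (X Y : topologicalType) (A : set X) (g : X -> Y) :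
  an A -> continuous g -> an (g @` A).
Proof.
move=> [M [f [cf <-]]] cg; exists M, (g \o f); split.
  by move=> x; apply: continuous_comp; [exact: cf | exact: cg].
by rewrite image_comp.
Qed.

Definition mclosed (M : MP) (C : set M) :=
  forall x, (forall e : Defs.Real, 0 < e -> exists y, C y /\ md x y < e) -> C x.

Section Sub.
Variables (M : MP) (C : set M) (hC : mclosed C).
Definition subT := {x : M | C x}.
Definition sd (a b : subT) : Defs.Real := md (proj1_sig a) (proj1_sig b).
Lemma sd_met : is_metric sd.
Proof.
rewrite /sd; split; first by move=> *; apply: md_ge0.
split; last split; last by move=> *; apply: md_tri.
  move=> [a Ca] [b Cb] /=; split; last by case=> ->; apply: md_xx.
  move/md_eq0 => ab; subst b; congr exist; apply: Prop_irrelevance.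
by move=> *; apply: md_sym.
Qed.
Lemma sd_cpl : forall u : nat -> subT,
       (forall e : Defs.Real, 0 < e -> exists N, forall m n, (N <= m)%N -> (N <= n)%N ->
          sd (u m) (u n) < e) ->
       exists x, forall e : Defs.Real, 0 < e -> exists N, forall n, (N <= n)%N -> sd (u n) x < e.
Proof.
move=> u hu.
have [x hx] := @md_cpl M (fun n => proj1_sig (u n)) hu.
have Cx : C x.
  apply: hC => e e0; have [N hN] := hx e e0.
  by exists (proj1_sig (u N)); split; [exact: proj2_sig | rewrite md_sym; apply: hN].
by exists (exist _ x Cx).
Qed.
Lemma sd_sep (x0 : subT) : exists en : nat -> subT,
       forall x e, 0 < e -> exists n, sd x (en n) < e.
Proof.
have [en hen] := md_sep (proj1_sig x0).
pose sn (p : nat * nat) : subT :=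
  match pselect (exists c : subT, md (en p.1) (proj1_sig c) < w p.2) with
  | left hx => proj1_sig (cid hx) | right _ => x0 end.
exists (fun m => match unpickle m with Some p => sn p | None => x0 end).
move=> c e e0.
have e20 : 0 < e / 2 by rewrite divr_gt0.
have [k hk] := w_small e20.
have [n hn] := hen (proj1_sig c) _ (w_gt0 k).
exists (pickle (n, k)); rewrite pickleK /sn /=.
case: pselect => [hx|nh]; last first.
  by exfalso; apply: nh; exists c; rewrite md_sym.
case: (cid hx) => c' /= hc'.
rewrite /sd; have := md_tri (proj1_sig c) (en n) (proj1_sig c'); lra.
Qed.
Definition MPsub : MP := @MkMP subT sd sd_met sd_cpl sd_sep.

Lemma MPsub_val_cont : continuous (fun x : mt MPsub => (proj1_sig x : mt M)).
Proof.
apply: mt_mt_cont => x e e0; exists e => // y; done.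
Qed.
End Sub.

Lemma an_closed (M : MP) (C : set M) : mclosed C -> @an (mt M) C.
Proof.
move=> hC; exists (MPsub hC), (fun x : mt (MPsub hC) => (proj1_sig x : mt M)).
split; first exact: MPsub_val_cont.
apply/seteqP; split => [_ [[x Cx] _ <-] //|x Cx].
by exists (exist _ x Cx).
Qed.


Section Prod2.
Variables M1 M2 : MP.
Definition pdist (a b : (M1 * M2)%type) : Defs.Real := Num.max (md a.1 b.1) (md a.2 b.2).
Lemma pdist_ge1 a b : md a.1 b.1 <= pdist a b.
Proof. by rewrite /pdist le_max lexx. Qed.
Lemma pdist_ge2 a b : md a.2 b.2 <= pdist a b.
Proof. by rewrite /pdist le_max lexx orbT. Qed.
Lemma pdist_met : is_metric pdist.
Proof.
split; first by move=> a b; apply: le_trans (pdist_ge1 a b); apply: md_ge0.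
split; last split.
- move=> [a1 a2] [b1 b2]; split; last first.
    by case=> -> ->; rewrite /pdist /= !md_xx maxxx.
  move=> h.
  have h1 := pdist_ge1 (a1, a2) (b1, b2); have h2 := pdist_ge2 (a1, a2) (b1, b2).
  rewrite h /= in h1 h2.
  have g1 := md_ge0 a1 b1; have g2 := md_ge0 a2 b2.
  have /md_eq0 -> : md a1 b1 = 0 by apply/eqP; rewrite eq_le h1 g1.
  by have /md_eq0 -> : md a2 b2 = 0 by apply/eqP; rewrite eq_le h2 g2.
- by move=> a b; rewrite /pdist md_sym [md a.2 _]md_sym.
- move=> x y z; rewrite /pdist ge_max; apply/andP; split.
    apply: le_trans (md_tri _ y.1 _) _; apply: lerD; rewrite le_max lexx ?orbT //.
  apply: le_trans (md_tri _ y.2 _) _; apply: lerD; rewrite le_max lexx ?orbT //.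
Qed.
Lemma pdist_cpl : forall u : nat -> (M1 * M2)%type,
       (forall e : Defs.Real, 0 < e -> exists N, forall m n, (N <= m)%N -> (N <= n)%N ->
          pdist (u m) (u n) < e) ->
       exists x, forall e : Defs.Real, 0 < e -> exists N, forall n, (N <= n)%N -> pdist (u n) x < e.
Proof.
move=> u hu.
have [x1 h1] := @md_cpl M1 (fun n => (u n).1)
  (fun e e0 => let: ex_intro N hN := hu e e0 in
     ex_intro _ N (fun m n hm hn => le_lt_trans (pdist_ge1 _ _) (hN m n hm hn))).
have [x2 h2] := @md_cpl M2 (fun n => (u n).2)
  (fun e e0 => let: ex_intro N hN := hu e e0 in
     ex_intro _ N (fun m n hm hn => le_lt_trans (pdist_ge2 _ _) (hN m n hm hn))).
exists (x1, x2) => e e0.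
have [N1 hN1] := h1 e e0; have [N2 hN2] := h2 e e0.
exists (maxn N1 N2) => n hn; rewrite /pdist gt_max /=.
rewrite hN1 ?hN2 //; [apply: leq_trans hn; exact: leq_maxr | apply: leq_trans hn; exact: leq_maxl].
Qed.
Lemma pdist_sep (x0 : (M1 * M2)%type) : exists en : nat -> (M1 * M2)%type,
       forall x e, 0 < e -> exists n, pdist x (en n) < e.
Proof.
have [e1 h1] := md_sep x0.1; have [e2 h2] := md_sep x0.2.
exists (fun m => match unpickle m with Some p => (e1 p.1, e2 p.2) | None => x0 end).
move=> x e e0; have [n1 hn1] := h1 x.1 e e0; have [n2 hn2] := h2 x.2 e e0.
by exists (pickle (n1, n2)); rewrite pickleK /pdist gt_max hn1 hn2.
Qed.
Definition MPprod : MP := @MkMP (M1 * M2)%type pdist pdist_met pdist_cpl pdist_sep.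

Lemma MPprod_fst_cont : continuous (fun x : mt MPprod => (x.1 : mt M1)).
Proof.
apply: mt_mt_cont => x e e0; exists e => // y hy; exact: le_lt_trans (pdist_ge1 _ _) hy.
Qed.
Lemma MPprod_snd_cont : continuous (fun x : mt MPprod => (x.2 : mt M2)).
Proof.
apply: mt_mt_cont => x e e0; exists e => // y hy; exact: le_lt_trans (pdist_ge2 _ _) hy.
Qed.
End Prod2.

Lemma prod_nbhsP (X Y : topologicalType) (a : X) (b : Y) (U : set (X * Y)) :
  nbhs (a, b) U -> exists P Q, [/\ nbhs a P, nbhs b Q & forall x y, P x -> Q y -> U (x, y)].
Proof.
move=> [[P Q] [/= Pa Qb] PQU]; exists P, Q; split => // x y Px Qy.
by apply: PQU.
Qed.

Lemma an_setX (X Y : topologicalType) (A : set X) (B : set Y) :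
  an A -> an B -> an (A `*` B).
Proof.
move=> [M1 [f1 [c1 r1]]] [M2 [f2 [c2 r2]]].
exists (MPprod M1 M2), (fun p : mt (MPprod M1 M2) => (f1 p.1, f2 p.2)); split.
  apply: mt_cont => x U /prod_nbhsP [P [Q [hP hQ hU]]].
  have [e1 e10 he1] := cont_mt c1 hP; have [e2 e20 he2] := cont_mt c2 hQ.
  exists (Num.min e1 e2); first by rewrite lt_min e10 e20.
  move=> y; rewrite lt_min => /andP[y1 y2]; apply: hU.
    by apply: he1; exact: le_lt_trans (pdist_ge1 _ _) y1.
  by apply: he2; exact: le_lt_trans (pdist_ge2 _ _) y2.
rewrite -r1 -r2; apply/seteqP; split.
  by move=> _ [[a b] _ <-]; split; [exists a | exists b].
by move=> [x y] [/= [a _ ea] [b _ eb]]; exists (a, b) => //=; rewrite ea eb.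
Qed.


Lemma minle_l (x y : Defs.Real) : Num.min x y <= x. Proof. by rewrite ge_min lexx. Qed.
Lemma minle_r (x y : Defs.Real) : Num.min x y <= y. Proof. by rewrite ge_min lexx orbT. Qed.
Lemma min_tri (v a b c : Defs.Real) : 0 <= v -> 0 <= a -> 0 <= b -> c <= a + b ->
  Num.min v c <= Num.min v a + Num.min v b.
Proof.
move=> v0 a0 b0 cab.
have m1 : 0 <= Num.min v a by rewrite le_min v0 a0.
have m2 : 0 <= Num.min v b by rewrite le_min v0 b0.
have e1 : forall x y : Defs.Real, x <= y -> Num.min x y = x by move=> x y; exact: min_l.
have e2 : forall x y : Defs.Real, y <= x -> Num.min x y = y by move=> x y; exact: min_r.
have g1 : Num.min v c <= v by exact: minle_l.
have g2 : Num.min v c <= c by exact: minle_r.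
have [ha|ha] := boolP (v <= a).
  rewrite (e1 _ _ ha); lra.
have [hb|hb] := boolP (v <= b).
  rewrite (e1 _ _ hb); lra.
rewrite -ltNge in ha; rewrite -ltNge in hb.
rewrite (e2 _ _ (ltW ha)) (e2 _ _ (ltW hb)); lra.
Qed.

Section Pi.
Variable M : nat -> MP.
Definition piT := forall k, car (M k).
Definition term (x y : piT) k : Defs.Real := Num.min (w k) (md (x k) (y k)).
Definition pi_d (x y : piT) : Defs.Real := sup (range (term x y)).

Lemma term_ge0 x y k : 0 <= term x y k.
Proof. by rewrite /term le_min ltW ?w_gt0 ?md_ge0. Qed.
Lemma term_lew x y k : term x y k <= w k.
Proof. exact: minle_l. Qed.
Lemma term_lemd x y k : term x y k <= md (x k) (y k).
Proof. exact: minle_r. Qed.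

Lemma pi_hs x y : has_sup (range (term x y)).
Proof.
split; first by exists (term x y 0%N), 0%N.
exists (w 0); move=> _ [k _ <-]; apply: le_trans (term_lew x y k) _; exact: w_le.
Qed.

Lemma term_le_pi x y k : term x y k <= pi_d x y.
Proof. by apply: sup_upper_bound; [exact: pi_hs | exists k]. Qed.

Lemma pi_le x y c : (forall k, term x y k <= c) -> pi_d x y <= c.
Proof.
move=> h; apply: ge_sup; first by exists (term x y 0%N), 0%N.
by move=> _ [k _ <-]; apply: h.
Qed.

Lemma pi_proj x y k : pi_d x y < w k -> md (x k) (y k) <= pi_d x y.
Proof.
move=> h; have t := term_le_pi x y k; rewrite /term in t.
case: (leP (w k) (md (x k) (y k))) => hk.
  by rewrite (min_l hk) in t; exfalso; move: (le_lt_trans t h); rewrite ltxx.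
by rewrite (min_r (ltW hk)) in t.
Qed.

Lemma pi_ge0 x y : 0 <= pi_d x y.
Proof. exact: le_trans (term_ge0 x y 0%N) (term_le_pi x y 0%N). Qed.

Lemma pi_met : is_metric pi_d.
Proof.
split; first exact: pi_ge0.
split; last split.
- move=> x y; split; last first.
    move=> ->; apply/eqP; rewrite eq_le pi_ge0 andbT; apply: pi_le => k.
    by rewrite /term md_xx ge_min lexx orbT.
  move=> h; apply: functional_extensionality_dep => k.
  have t := term_le_pi x y k; rewrite h /term ge_min in t.
  case/orP: t => t; first by move: (w_gt0 k); rewrite ltNge t.
  by apply/md_eq0; apply/eqP; rewrite eq_le t md_ge0.
- move=> x y; rewrite /pi_d; suff -> : term x y = term y x by [].
  by apply/funext => k; rewrite /term md_sym.
- move=> x y z; apply: pi_le => k.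
  apply: le_trans (lerD (term_le_pi x y k) (term_le_pi y z k)).
  apply: min_tri; [exact: ltW (w_gt0 k) | exact: md_ge0 | exact: md_ge0 | exact: md_tri].
Qed.

Lemma pi_coord_cauchy (u : nat -> piT) k :
  (forall e : Defs.Real, 0 < e -> exists N, forall m n, (N <= m)%N -> (N <= n)%N ->
          pi_d (u m) (u n) < e) ->
  (forall e : Defs.Real, 0 < e -> exists N, forall m n, (N <= m)%N -> (N <= n)%N ->
          md (u m k) (u n k) < e).
Proof.
move=> hu e e0.
have e'0 : 0 < Num.min e (w k) by rewrite lt_min e0 w_gt0.
have [N hN] := hu _ e'0; exists N => m n hm hn.
have := hN m n hm hn; rewrite lt_min => /andP[h1 h2].
exact: le_lt_trans (pi_proj h2) h1.
Qed.

Lemma pi_cpl : forall u : nat -> piT,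
       (forall e : Defs.Real, 0 < e -> exists N, forall m n, (N <= m)%N -> (N <= n)%N ->
          pi_d (u m) (u n) < e) ->
       exists x, forall e : Defs.Real, 0 < e -> exists N, forall n, (N <= n)%N -> pi_d (u n) x < e.
Proof.
move=> u hu.
pose l : piT := fun k => proj1_sig (cid (@md_cpl (M k) (fun n => u n k) (@pi_coord_cauchy u k hu))).
have hl : forall k e, 0 < e -> exists N, forall n, (N <= n)%N -> md (u n k) (l k) < e.
  by move=> k; rewrite /l; case: cid.
exists l => e e0.
have e20 : 0 < e / 2 by rewrite divr_gt0.
have [K hK] := w_small e20.
have : exists N, forall k n, (k < K)%N -> (N <= n)%N -> md (u n k) (l k) < e / 2.
  elim: K {hK} => [|K [N hN]]; first by exists 0%N.
  have [N' hN'] := hl K _ e20.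
  exists (maxn N N') => k n; rewrite ltnS leq_eqVlt => /orP[/eqP -> |kK] hn.
    by apply: hN'; apply: leq_trans hn; apply: leq_maxr.
  by apply: hN => //; apply: leq_trans hn; apply: leq_maxl.
move=> [N hN]; exists N => n hn.
apply: le_lt_trans (_ : e / 2 < e); last by lra.
apply: pi_le => k; case: (ltnP k K) => kK.
  exact: le_trans (term_lemd _ _ _) (ltW (hN k n kK hn)).
apply: le_trans (term_lew _ _ _) _; apply: le_trans (w_le kK) (ltW hK).
Qed.

Lemma pi_sep (x0 : piT) : exists en : nat -> piT,
       forall x e, 0 < e -> exists n, pi_d x (en n) < e.
Proof.
pose E k := proj1_sig (cid (md_sep (x0 k))).
have hE : forall k x e, 0 < e -> exists n, md x (E k n) < e.
  by move=> k; rewrite /E; case: cid.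
exists (fun m => match @unpickle (nat * seq nat)%type m with
  | Some p => fun k => if (k < p.1)%N then E k (nth 0%N p.2 k) else x0 k
  | None => x0 end).
move=> x e e0.
have e20 : 0 < e / 2 by rewrite divr_gt0.
have [K hK] := w_small e20.
pose nk k := proj1_sig (cid (hE k (x k) _ e20)).
have hnk : forall k, md (x k) (E k (nk k)) < e / 2 by move=> k; rewrite /nk; case: cid.
exists (pickle (K, mkseq nk K)); rewrite pickleK /=.
apply: le_lt_trans (_ : e / 2 < e); last by lra.
apply: pi_le => k; case: (ltnP k K) => kK.
  rewrite /term /= kK nth_mkseq //; exact: le_trans (minle_r _ _) (ltW (hnk k)).
apply: le_trans (term_lew _ _ _) _; apply: le_trans (w_le kK) (ltW hK).
Qed.

Definition MPpi : MP := @MkMP piT pi_d pi_met pi_cpl pi_sep.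

Lemma MPpi_proj_cont k : continuous (fun x : mt MPpi => (x k : mt (M k))).
Proof.
apply: mt_mt_cont => x e e0; exists (Num.min e (w k)); first by rewrite lt_min e0 w_gt0.
move=> y; rewrite lt_min => /andP[h1 h2].
exact: le_lt_trans (pi_proj h2) h1.
Qed.
End Pi.


Definition nd (n m : nat) : Defs.Real := if n == m then 0 else 1.
Lemma nd_met : is_metric nd.
Proof.
rewrite /nd; split; first by move=> x y; case: ifP.
split; last split.
- move=> x y; split; last by move=> ->; rewrite eqxx.
  by case: eqP => // _ /eqP; rewrite oner_eq0.
- by move=> x y; rewrite eq_sym.
- move=> x y z; case: (@eqP _ x z) => xz; case: (@eqP _ x y) => xy;
    case: (@eqP _ y z) => yz; try lra; exfalso; congruence.
Qed.
Lemma nd_lt1 n m : nd n m < 1 -> n = m.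
Proof. by rewrite /nd; case: eqP => // _; rewrite ltxx. Qed.
Lemma nd_cpl : forall u : nat -> nat,
       (forall e : Defs.Real, 0 < e -> exists N, forall m n, (N <= m)%N -> (N <= n)%N ->
          nd (u m) (u n) < e) ->
       exists x, forall e : Defs.Real, 0 < e -> exists N, forall n, (N <= n)%N -> nd (u n) x < e.
Proof.
move=> u hu; have [N hN] := hu 1 ltr01.
exists (u N) => e e0; exists N => n hn.
by rewrite (nd_lt1 (hN n N hn (leqnn N))) /nd eqxx.
Qed.
Lemma nd_sep (x0 : nat) : exists en : nat -> nat,
       forall x e, 0 < e -> exists n, nd x (en n) < e.
Proof. by exists id => x e e0; exists x; rewrite /nd eqxx. Qed.
Definition MPnat : MP := @MkMP nat nd nd_met nd_cpl nd_sep.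

Lemma an_set0 (X : topologicalType) : an (@set0 X).
Proof.
have hC : mclosed (@set0 MPnat).
  by move=> x /(_ 1 ltr01) [y [[]]].
exists (MPsub hC), (fun s : mt (MPsub hC) => False_rect X (proj2_sig s)); split.
  by move=> [x []].
by apply/seteqP; split => [_ [[x []]]|].
Qed.

Definition upd (T : nat -> Type) (p : forall k, T k) (n : nat) (a : T n) : forall k, T k :=
  fun k => match PeanoNat.Nat.eq_dec n k with left e => eq_rect n T a k e | right _ => p k end.
Lemma upd_eq (T : nat -> Type) (p : forall k, T k) (n : nat) (a : T n) : upd p a n = a.
Proof.
rewrite /upd; case: (PeanoNat.Nat.eq_dec n n) => [e|ne]; last by exfalso; apply: ne.
by rewrite (eq_axiomK e).
Qed.

Lemma an_choice (X : topologicalType) (A : nat -> set X) : (forall n, an (A n)) ->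
  exists (M : nat -> MP) (f : forall n, mt (M n) -> X),
    forall n, continuous (f n) /\ range (f n) = A n.
Proof.
move=> H.
have H' : forall n, {M : MP & {f : mt M -> X | continuous f /\ range f = A n}}.
  move=> n; have [M hM] := cid (H n); have [f hf] := cid hM; exists M, f; exact: hf.
exists (fun n => projT1 (H' n)), (fun n => proj1_sig (projT2 (H' n))).
by move=> n; case: (H' n) => M [f hf].
Qed.

Lemma an_bigcup (X : topologicalType) (A : nat -> set X) : (forall n, an (A n)) ->
  an (\bigcup_n A n).
Proof.
move=> H.
have [[n0 hn0]|none] := pselect (exists n, A n !=set0); last first.
  suff -> : \bigcup_n A n = set0 by apply: an_set0.
  by apply/seteqP; split => // x [n _ Anx]; apply: none; exists n, x.
pose g m := if pselect (A m !=set0) then m else n0.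
have hg : forall m, A (g m) !=set0 by move=> m; rewrite /g; case: pselect.
have hg2 : forall m, A m !=set0 -> g m = m by move=> m h; rewrite /g; case: pselect.
have [M [f hf]] := an_choice H.
pose N m := M (g m).
pose F m : mt (N m) -> X := f (g m).
have p0 : forall m, {a : N m | True}.
  move=> m; have hA := hg m; have [_ hr] := hf (g m).
  apply: cid; move: hA; rewrite -hr => -[_ [a _ _]]; by exists a.
pose p : piT N := fun m => proj1_sig (p0 m).
exists (MPprod MPnat (MPpi N)), (fun q : mt (MPprod MPnat (MPpi N)) => F q.1 (q.2 q.1)).
split.
  apply: mt_cont => -[n x] U hU.
  have [d d0 hd] := cont_mt (proj1 (hf (g n))) hU.
  exists (Num.min 1 (Num.min d (w n))); first by rewrite !lt_min ltr01 d0 w_gt0.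
  move=> [m y]; rewrite !lt_min => /andP[h1 /andP[h2 h3]].
  have e1 := le_lt_trans (pdist_ge1 _ _) h1; have := nd_lt1 e1; rewrite /= => nm; subst m.
  have e2 := le_lt_trans (pdist_ge2 _ _) h3; have e3 := le_lt_trans (pdist_ge2 _ _) h2.
  by apply: hd; exact: le_lt_trans (pi_proj e2) e3.
apply/seteqP; split.
  move=> _ [[n x] _ <-]; exists (g n) => //; rewrite -(proj2 (hf (g n))); by exists (x n).
move=> z [k _ Akz].
have gk : g k = k by apply: hg2; exists z.
have : range (F k) z by rewrite /F (proj2 (hf (g k))) gk.
move=> [a _ az].
exists (k, upd p a) => //=; by rewrite upd_eq.
Qed.

Lemma an_bigcap (X : topologicalType) (hX : hausdorff_space X) (A : nat -> set X) :
  (forall n, an (A n)) -> an (\bigcap_n A n).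
Proof.
move=> H; have [M [f hf]] := an_choice H.
pose C : set (MPpi M) := [set x | forall n, f n (x n) = f 0%N (x 0%N)].
have hC : mclosed C.
  move=> x hx n; apply: hX => U V hU hV.
  have [d1 d10 hd1] := cont_mt (proj1 (hf n)) hU.
  have [d0 d00 hd0] := cont_mt (proj1 (hf 0%N)) hV.
  have e0 : 0 < Num.min (Num.min d1 (w n)) (Num.min d0 (w 0)) by rewrite !lt_min d10 d00 !w_gt0.
  have [y [Cy]] := hx _ e0; rewrite !lt_min => /andP[/andP[h1 h2] /andP[h3 h4]].
  exists (f n (y n)); split.
    by apply: hd1; exact: le_lt_trans (pi_proj h2) h1.
  by rewrite Cy; apply: hd0; exact: le_lt_trans (pi_proj h4) h3.
exists (MPsub hC), (fun s : mt (MPsub hC) => f 0%N (proj1_sig s 0%N)); split.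
  apply: mt_cont => x U hU.
  have [d d0 hd] := cont_mt (proj1 (hf 0%N)) hU.
  exists (Num.min d (w 0)); first by rewrite lt_min d0 w_gt0.
  move=> y; rewrite lt_min => /andP[h1 h2].
  by apply: hd; exact: le_lt_trans (pi_proj h2) h1.
apply/seteqP; split.
  move=> _ [[x Cx] _ <-] n _ /=; rewrite -(Cx n) -(proj2 (hf n)); by exists (x n).
move=> z hz.
have hz' : forall n, {a : M n | f n a = z}.
  move=> n; apply: cid; have := hz n I; rewrite -(proj2 (hf n)) => -[a _ az]; by exists a.
pose x : piT M := fun n => proj1_sig (hz' n).
have Cx : C x by move=> n; rewrite /x; case: (hz' n) => a ->; case: (hz' 0%N) => b ->.
exists (exist _ x Cx) => //=; rewrite /x; by case: (hz' 0%N).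
Qed.


Section Borel.
Variable X : topologicalType.
Lemma borel_open (A : set X) : open A -> borel A.
Proof. by move=> oA; apply: sub_sigma_algebra. Qed.
Lemma borel_setC (A : set X) : borel A -> borel (~` A).
Proof. by move=> bA; rewrite -setTD; apply: sigma_algebraCD. Qed.
Lemma borel_bigcup (A : nat -> set X) : (forall n, borel (A n)) -> borel (\bigcup_n A n).
Proof. by move=> h; apply: sigma_algebra_bigcup. Qed.
Lemma borel_setU (A B : set X) : borel A -> borel B -> borel (A `|` B).
Proof.
move=> hA hB; rewrite -bigcup2E; apply: borel_bigcup => -[|[|n]] //=.
exact: sigma_algebra0.
Qed.
Lemma borel_setI (A B : set X) : borel A -> borel B -> borel (A `&` B).
Proof.
move=> hA hB; rewrite -[A]setCK -[B]setCK -setCU.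
by apply: borel_setC; apply: borel_setU; apply: borel_setC.
Qed.
Lemma borel_set0 : borel (@set0 X).
Proof. exact: sigma_algebra0. Qed.
End Borel.

Lemma borel_preimage (X Y : topologicalType) (f : X -> Y) (B : set Y) :
  continuous f -> borel B -> borel (f @^-1` B).
Proof.
move=> cf; apply: (@smallest_sub _ _ _ [set B | borel (f @^-1` B)]).
  split => /=.
  - by rewrite preimage_set0; apply: borel_set0.
  - by move=> A hA; rewrite setTD -preimage_setC; apply: borel_setC.
  - by move=> A hA; rewrite preimage_bigcup; apply: borel_bigcup.
move=> A oA /=; apply: borel_open; apply: open_comp => // x _; exact: cf.
Qed.

Section Core.
Variable M : MP.
Definition Cn (U : set (mt M)) n := [set x : mt M | forall y, md x y < w n -> U y].
Lemma Cn_closed U n : mclosed (Cn U n).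
Proof.
move=> x hx z xz.
have r0 : 0 < w n - md x z by rewrite subr_gt0.
have [y [Cy xy]] := hx _ r0.
apply: Cy; have := md_tri y x z; rewrite (md_sym y x); lra.
Qed.
Lemma open_Cn (U : set (mt M)) : open U -> U = \bigcup_n Cn U n.
Proof.
move=> /mt_open oU; apply/seteqP; split.
  move=> x /oU [e e0 he]; have [n hn] := w_small e0.
  by exists n => // y hy; apply: he; apply: lt_trans hy hn.
by move=> x [n _ hx]; apply: hx; rewrite md_xx w_gt0.
Qed.
Lemma compl_closed (U : set (mt M)) : open U -> mclosed (~` U).
Proof.
move=> /mt_open oU x hx Ux.
have [e e0 he] := oU x Ux; have [y [nUy xy]] := hx e e0.
by apply: nUy; apply: he.
Qed.
Lemma an_open (U : set (mt M)) : open U -> an U.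
Proof.
move=> oU; rewrite (open_Cn oU); apply: an_bigcup => n; apply: an_closed; exact: Cn_closed.
Qed.
Lemma an_borel (B : set (mt M)) : borel B -> an B.
Proof.
suff : borel B -> an B /\ an (~` B) by move=> h /h[].
apply: (@smallest_sub _ _ _ [set B | an B /\ an (~` B)]).
  split => /=.
  - split; first exact: an_set0.
    by rewrite setC0; apply: an_closed.
  - by move=> A [h1 h2]; rewrite setTD setCK.
  - move=> A hA; split; first by apply: an_bigcup => n; case: (hA n).
    rewrite setC_bigcup; apply: an_bigcap; first exact: metric_hausdorff.
    by move=> n; case: (hA n).
move=> U oU; split; first exact: an_open.
by apply: an_closed; apply: compl_closed.
Qed.
End Core.

Lemma an_setI_borel (X : topologicalType) (A B : set X) : an A -> borel B -> an (A `&` B).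
Proof.
move=> [M [f [cf rf]]] bB.
have bB' : borel (f @^-1` B) := borel_preimage cf bB.
have [N [g [cg rg]]] := an_borel bB'.
exists N, (f \o g); split.
  by move=> x; apply: continuous_comp; [exact: cg | exact: cf].
rewrite -rf; apply/seteqP; split.
  move=> _ [x _ <-]; split; first by exists (g x).
  have : range g (g x) by exists x.
  by rewrite rg.
move=> _ [[y _ <-] By]; have : (f @^-1` B) y by [].
by rewrite -rg => -[x _ <-]; exists x.
Qed.


Lemma cont_fst (X Y : topologicalType) : continuous (@fst X Y).
Proof. by move=> [a b]; apply: cvg_fst. Qed.
Lemma cont_snd (X Y : topologicalType) : continuous (@snd X Y).
Proof. by move=> [a b]; apply: cvg_snd. Qed.
Lemma cont_pair (Z X Y : topologicalType) (f : Z -> X) (g : Z -> Y) :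
  continuous f -> continuous g -> continuous (fun z => (f z, g z)).
Proof. by move=> cf cg z; apply: cvg_pair; [exact: cf | exact: cg]. Qed.
Lemma cont_comp (X Y Z : topologicalType) (f : X -> Y) (g : Y -> Z) :
  continuous f -> continuous g -> continuous (g \o f).
Proof. by move=> cf cg x; apply: continuous_comp; [exact: cf | exact: cg]. Qed.

Lemma an_setT_polish (P : topologicalType) : polish P -> an (@setT P).
Proof.
move=> hP; apply: analytic_an; exists P, id; split => //; split.
  by move=> x; exact: cvg_id.
by apply/seteqP; split => // x _; exists x.
Qed.

Lemma an_upclosure (F R : topologicalType) (leF : F -> F -> Prop) (leR : R -> R -> Prop)
  (A : set (F * R)) :
  an (@setT F) -> an (@setT R) ->
  borel [set p : F * F | leF p.1 p.2] ->
  borel [set p : R * R | leR p.1 p.2] ->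
  an A -> an (upclosure (le_opprod leF leR) A).
Proof.
move=> aF aR bF bR aA.
have aT : an (@setT (F * R)) by rewrite -setXTT; apply: an_setX.
pose Le : set ((F * R) * (F * R)) :=
  (fun uv : (F * R) * (F * R) => (uv.2.1, uv.1.1)) @^-1` [set p : F * F | leF p.1 p.2] `&`
  (fun uv : (F * R) * (F * R) => (uv.1.2, uv.2.2)) @^-1` [set p : R * R | leR p.1 p.2].
have bLe : borel Le.
  apply: borel_setI; apply: borel_preimage => //; apply: cont_pair.
  - exact: (cont_comp (@cont_snd _ _) (@cont_fst _ _)).
  - exact: (cont_comp (@cont_fst _ _) (@cont_fst _ _)).
  - exact: (cont_comp (@cont_fst _ _) (@cont_snd _ _)).
  - exact: (cont_comp (@cont_snd _ _) (@cont_snd _ _)).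
have -> : upclosure (le_opprod leF leR) A = snd @` ((A `*` setT) `&` Le).
  apply/seteqP; split.
    by move=> v [u Au [h1 h2]]; exists (u, v).
  by move=> _ [[u v] [[Au _] [h1 h2]] <-]; exists u.
apply: an_image; last exact: cont_snd.
by apply: an_setI_borel => //; apply: an_setX.
Qed.

Lemma graph_borel (O : topologicalType) (hO : polish O) (phi : O -> O) :
  borel_measurable phi -> borel [set q : O * O | q.2 = phi q.1].
Proof.
move=> mphi; rewrite -[X in borel X]setCK; apply: borel_setC.
have [[x0 _]|no] := pselect (exists x : O, True); last first.
  suff -> : ~` [set q : O * O | q.2 = phi q.1] = set0 by apply: borel_set0.
  by apply/seteqP; split => // -[a b] _; apply: no; exists a.
pose Mo := MPof hO.
have [E hE] := @md_sep Mo x0.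
pose Ball a m := [set y : O | @md Mo (E a) y < w m].
have oBall : forall a m, open (Ball a m) by move=> a m; exact: pd_ball_open.
pose Dj a b m : Prop := forall z, ~ (Ball a m z /\ Ball b m z).
pose Rr a b m := [set q : O * O | Dj a b m /\ Ball a m (phi q.1) /\ Ball b m q.2].
have -> : ~` [set q : O * O | q.2 = phi q.1] =
    \bigcup_a \bigcup_b \bigcup_m Rr a b m.
  apply/seteqP; split.
    move=> [q1 q2] /= hq.
    set u := phi q1.
    have r0 : 0 < @md Mo u q2 / 4.
      rewrite divr_gt0 // lt_neqAle md_ge0 andbT eq_sym; apply/negP => /eqP.
      by move/md_eq0 => e; exact: hq (esym e).
    have [m hm] := w_small r0.
    have [a ha] := hE u _ (w_gt0 m); have [b hb] := hE q2 _ (w_gt0 m).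
    exists a => //; exists b => //; exists m => //; split; last split.
    - move=> z [/= z1 z2].
      rewrite /Ball /= in z1 z2.
      have t1 := @md_tri Mo u (E a) q2; have t2 := @md_tri Mo (E a) z q2.
      have t3 := @md_tri Mo z (E b) q2.
      rewrite (@md_sym Mo z (E b)) (@md_sym Mo (E b) q2) in t3.
      have z1' : @md Mo (E a) z < w m := z1.
      have z2' : @md Mo (E b) z < w m := z2.
      clearbody u; clear -t1 t2 t3 z1' z2' ha hb hm.
      move: t1 t2 t3 z1' z2' ha hb hm.
      set A1 := md _ _; set A2 := md _ _; set A3 := md _ _; set A4 := md _ _.
      set A5 := md _ _; set A6 := md _ _; set A7 := w m.
      move=> *; lra.
    - by move: ha; rewrite (@md_sym Mo) => h; exact: h.
    - by move: hb; rewrite (@md_sym Mo) => h; exact: h.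
  move=> [q1 q2] [a _ [b _ [m _ [hD [h1 h2]]]]] /= e.
  by apply: (hD q2); split => //; rewrite e.
apply: borel_bigcup => a; apply: borel_bigcup => b; apply: borel_bigcup => m.
have [hD|hD] := pselect (Dj a b m); last first.
  suff -> : Rr a b m = set0 by apply: borel_set0.
  by apply/seteqP; split => // q [].
have -> : Rr a b m = (fst @^-1` (phi @^-1` Ball a m)) `&` (snd @^-1` Ball b m).
  by apply/seteqP; split => q /=; [case=> _ [] | case=> h1 h2; split].
apply: borel_setI.
  apply: borel_preimage; first exact: cont_fst.
  by apply: mphi; apply: borel_open.
apply: borel_preimage; first exact: cont_snd.
exact: borel_open.
Qed.

Local Close Scope ring_scope.
Unset Implicit Arguments.
Theorem lemma7 (Omega F R : topologicalType)
  (leF : F -> F -> Prop) (leR : R -> R -> Prop) :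
  polish Omega ->
  souslin F -> souslin R ->
  partial_order leF -> partial_order leR ->
  borel [set p : F * F | leF p.1 p.2] ->
  borel [set p : R * R | leR p.1 p.2] ->
  quasi_universal_space (DP_RV Omega leF leR).
Proof.
move=> hO [_ hF] [_ hR] _ _ bF bR.
have aF := analytic_an hF; have aR := analytic_an hR.
have aO := an_setT_polish hO.
split => //; split.
  move=> [dp [hup [A [hA hdp]]]]; rewrite /DP_RV /=.
  apply: an_analytic.
  have -> : [set p : Omega * (F * R) | dp p.2] = setT `*` dp.
    by apply/seteqP; split => p //= [].
  apply: an_setX => //; rewrite hdp.
  by apply: an_upclosure => //; apply: analytic_an.
move=> alpha phi hS mphi; rewrite /DP_RV /= in hS *.
set S := [set p : Omega * (F * R) | proj1_sig (alpha p.1) p.2] in hS.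
pose G := (fun q : Omega * (Omega * (F * R)) => (q.1, q.2.1)) @^-1`
            [set q : Omega * Omega | q.2 = phi q.1].
have bG : borel G.
  apply: borel_preimage; last exact: graph_borel.
  apply: cont_pair; first exact: cont_fst.
  exact: (cont_comp (@cont_snd _ _) (@cont_fst _ _)).
apply: an_analytic.
have -> : [set p : Omega * (F * R) | proj1_sig ((alpha \o phi) p.1) p.2] =
   (fun q : Omega * (Omega * (F * R)) => (q.1, q.2.2)) @` ((setT `*` S) `&` G).
  apply/seteqP; split.
    by move=> [om x] /= h; exists (om, (phi om, x)).
  move=> _ [[om [om' x]] [[_ Sx] e] <-]; rewrite /= in e Sx *.
  have e' : om' = phi om := e; by rewrite /S /= e' in Sx.
apply: an_image.
  apply: an_setI_borel => //; apply: an_setX => //; exact: analytic_an.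
apply: cont_pair; first exact: cont_fst.
exact: (cont_comp (@cont_snd _ _) (@cont_snd _ _)).
Qed.
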